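(* For each $\rho\in\sigma(1)$, the vector $\Pi_\rho:=\pi_2^*(\chi_\rho)\in\mathbb{Z}(Q)^\vee$ is an extremal perfect matching of $Q$. Moreover, for every arrow $a\in Q_1$, $a\in\operatorname{supp}(\Pi_\rho)$ if and only if $x_\rho$ divides $x^{\operatorname{div}(a)}$.
   Context: Let $\mathbb{k}$ be an algebraically closed field and $X=\operatorname{Spec}R$ a normal affine toric variety of dimension $n$ with a torus-fixed point, $R=\mathbb{k}[\sigma^\vee\cap M]$, $\sigma\subset N\otimes\mathbb{R}$ strongly convex rational polyhedral, $N=M^\vee$. Let $\sigma(1)$ be the rays, $d=|\sigma(1)|$, $v_\rho$ primitive generators, $D_\rho$ toric prime divisors, torus-invariant divisors identified with $\mathbb{Z}^d$ with standard basis $\chi_\rho$ (and dual basis also denoted $\chi_\rho$); exact sequence $0\to M\to\mathbb{Z}^d\xrightarrow{\deg}\operatorname{Cl}(X)\to0$, $u\mapsto\sum_\rho\langle u,v_\rho\rangle D_\rho$. Cox ring $\mathbb{k}[x_\rho]$, $x^D=\prod x_\rho^{D_\rho}$. Let $\mathscr{E}=(E_0=\mathcal{O}_X,E_1,\dots,E_r)$ be pairwise distinct rank one reflexive sheaves, $E_i=\mathcal{O}_X(D_i')$, and $Q$ its quiver of sections: vertices $0,\dots,r$; an arrow $a:i\to j$ with label $\operatorname{div}(a)\in\mathbb{N}^d$ for each irreducible $T_M$-invariant section $x^{\operatorname{div}(a)}$ of $\operatorname{Hom}(E_i,E_j)\cong H^0(\mathcal{O}_X(D_j'-D_i'))$ (irreducible: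 not in the image of multiplication through any $E_k$, $k\neq i,j$). $\operatorname{Wt}(Q)=\{\theta\in\mathbb{Z}^{Q_0}:\sum\theta_i=0\}$; $\pi:\mathbb{Z}^{Q_1}\to\operatorname{Wt}(Q)\oplus\mathbb{Z}^d$, $\chi_a\mapsto(\chi_{\mathsf{h}(a)}-\chi_{\mathsf{t}(a)},\operatorname{div}(a))$; $\mathbb{Z}(Q)=\pi(\mathbb{Z}^{Q_1})$, $\mathbb{N}(Q)=\pi(\mathbb{N}^{Q_1})$; $\pi_1,\pi_2$ the projections to $\operatorname{Wt}(Q)$ and $\mathbb{Z}^d$, and $\pi_2^*:(\mathbb{Z}^d)^\vee\to\mathbb{Z}(Q)^\vee$ the dual of $\pi_2$. The restriction of $\pi_2$ to $\ker\pi_1$ is an isomorphism onto the image of $M$; let $\psi:M\to\mathbb{Z}(Q)$ be the resulting injection, with dual $\psi^*:\mathbb{Z}(Q)^\vee\to N$. Let $C=\{v\in\mathbb{Z}(Q)^\vee\otimes\mathbb{R}:\langle v,\pi(\chi_a)\rangle\ge0\ \forall a\in Q_1\}$. A perfect matching of $Q$ is the primitive lattice point on a one-dimensional face of $C$; it is extremal if $\psi^*(\Pi)=v_\rho$ for some $\rho\in\sigma(1)$. Its support is $\operatorname{supp}(\Pi)=\{a\in Q_1:\langle\Pi,\pi(\chi_a)\rangle>0\}$. *)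

(* Defs.v *)
From HB Require Import structures.
From mathcomp Require Import all_boot all_order all_algebra.
From mathcomp Require Import reals.
Set Implicit Arguments. Unset Strict Implicit. Unset Printing Implicit Defensive.
Import Order.TTheory GRing.Theory Num.Theory.
Local Open Scope ring_scope.

Section Toric.
Variables (R : realType) (n d : nat) (v : 'I_d -> 'I_n -> int).
(* N = M = Z^n; v rho = primitive generator of the ray rho, rho : 'I_d *)

Definition dotM (u w : 'I_n -> int) : int := \sum_(k < n) u k * w k.

(* the map M -> Z^d, u |-> sum_rho <u, v_rho> D_rho *)
Definition divM (u : 'I_n -> int) : 'I_d -> int := fun rho => dotM u (v rho).

(* a torus-invariant divisor is linearly equivalent to 0 (lies in the image of M) *)
Definition principal (D : 'I_d -> int) : Prop :=
  exists u : 'I_n -> int, forall rho, D rho = divM u rho.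

Definition effective (D : 'I_d -> int) : Prop := forall rho, 0 <= D rho.

Definition in_sigma (x : 'I_n -> R) : Prop :=
  exists lam : 'I_d -> R, (forall rho, 0 <= lam rho) /\
    forall k, x k = \sum_(rho < d) lam rho * (v rho k)%:~R.

Definition primitive_vec (w : 'I_n -> int) : Prop :=
  forall (c : int) (w' : 'I_n -> int), (forall k, w k = c * w' k) -> c = 1 \/ c = -1.

Definition toric_cone_data : Prop :=
  (forall rho, primitive_vec (v rho)) /\
  (* each v rho spans a ray of sigma: it is not in the cone spanned by the others *)
  (forall rho, ~ exists lam : 'I_d -> R, (forall rho', 0 <= lam rho') /\ lam rho = 0 /\
        forall k, (v rho k)%:~R = \sum_(rho' < d) lam rho' * (v rho' k)%:~R) /\
  (forall x, in_sigma x -> in_sigma (fun k => - x k) -> forall k, x k = 0) /\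
  (* full-dimensional (X has a torus-fixed point) *)
  (forall u : 'I_n -> R, (forall rho, \sum_(k < n) u k * (v rho k)%:~R = 0) ->
      forall k, u k = 0).

(* ---- the collection of rank one reflexive sheaves E_i = O_X(D' i) ---- *)
Variables (r : nat) (D' : 'I_r.+1 -> 'I_d -> int).

(* T_M-invariant sections x^E of Hom(E_i,E_j) = H^0(O_X(D'_j - D'_i)):
   E effective and E linearly equivalent to D'_j - D'_i *)
Definition sect (i j : 'I_r.+1) (E : 'I_d -> int) : Prop :=
  effective E /\ principal (fun rho => E rho - (D' j rho - D' i rho)).

Definition nonzero_div (E : 'I_d -> int) : Prop := exists rho, E rho != 0.

Definition irreducible (i j : 'I_r.+1) (E : 'I_d -> int) : Prop :=
  sect i j E /\ nonzero_div E /\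
  ~ exists (k : 'I_r.+1) (E1 E2 : 'I_d -> int),
      [/\ sect i k E1, sect k j E2, nonzero_div E1, nonzero_div E2 &
          forall rho, E rho = E1 rho + E2 rho].

Record arrow := Arrow {
  tl : 'I_r.+1; hd : 'I_r.+1; lab : 'I_d -> int; arrow_irr : irreducible tl hd lab }.

(* the ambient lattice Z^{Q_0} (+) Z^d, containing Wt(Q) (+) Z^d *)
Definition lat : Type := ('I_r.+1 -> int) * ('I_d -> int).

Definition addL (x y : lat) : lat := (fun k => x.1 k + y.1 k, fun rho => x.2 rho + y.2 rho).

Definition piA (a : arrow) : lat :=
  (fun k => ((k == hd a)%:R - (k == tl a)%:R : int), lab a).

Definition ZQ (x : lat) : Prop :=
  exists s : seq (int * arrow),
    (forall k, x.1 k = \sum_(p <- s) p.1 * (piA p.2).1 k) /\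
    (forall rho, x.2 rho = \sum_(p <- s) p.1 * (piA p.2).2 rho).

(* Z(Q)^vee (x) R = Hom_Z(Z(Q), R): functions additive on Z(Q),
   considered up to equality on Z(Q) *)
Definition dualR (f : lat -> R) : Prop :=
  forall x y, ZQ x -> ZQ y -> f (addL x y) = f x + f y.

Definition eqZQ (f g : lat -> R) : Prop := forall x, ZQ x -> f x = g x.

(* lattice points: elements of Z(Q)^vee = Hom_Z(Z(Q), Z) *)
Definition integral (f : lat -> R) : Prop :=
  dualR f /\ forall x, ZQ x -> exists z : int, f x = z%:~R.

Definition inC (f : lat -> R) : Prop := dualR f /\ forall a : arrow, 0 <= f (piA a).

(* faces of C: F = C cap m^perp for m in Z(Q) (x) R with m >= 0 on C;
   m = sum_i lam_i x_i with x_i in Z(Q) *)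
Definition face_of_C (F : (lat -> R) -> Prop) : Prop :=
  exists (k : nat) (lam : 'I_k -> R) (x : 'I_k -> lat),
    [/\ forall i, ZQ (x i),
        forall f, inC f -> 0 <= \sum_(i < k) lam i * f (x i) &
        forall f, F f <-> (inC f /\ \sum_(i < k) lam i * f (x i) = 0)].

Definition one_dim_face_of_C (F : (lat -> R) -> Prop) : Prop :=
  face_of_C F /\
  exists g, [/\ F g, ~ eqZQ g (fun _ => 0) &
              forall f, F f -> exists t : R, eqZQ f (fun x => t * g x)].

Definition primitive_dual (P : lat -> R) : Prop :=
  integral P /\ ~ eqZQ P (fun _ => 0) /\
  forall (c : int) (g : lat -> R), integral g -> eqZQ P (fun x => c%:~R * g x) ->
    c = 1 \/ c = -1.

Definition perfect_matching (P : lat -> R) : Prop :=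
  primitive_dual P /\ exists F, one_dim_face_of_C F /\ F P.

Definition psi (u : 'I_n -> int) : lat := (fun _ => 0, divM u).

(* extremal: psi^*(P) = v_rho, i.e. <P, psi(u)> = <u, v_rho> for all u in M
   (including that psi(u) indeed lies in Z(Q)) *)
Definition extremal_at (P : lat -> R) (rho : 'I_d) : Prop :=
  forall u : 'I_n -> int, ZQ (psi u) /\ P (psi u) = (dotM u (v rho))%:~R.

Definition perfect_matching_extremal (P : lat -> R) : Prop :=
  perfect_matching P /\ exists rho, extremal_at P rho.

Definition supp (P : lat -> R) (a : arrow) : Prop := 0 < P (piA a).

Definition Pi_rho (rho : 'I_d) : lat -> R := fun x => (x.2 rho)%:~R.

Definition x_divides (rho : 'I_d) (E : 'I_d -> int) : Prop :=
  exists E' : 'I_d -> int, effective E' /\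
    forall rho', E rho' = E' rho' + ((rho' == rho)%:R : int).

End Toric.

(* Main.v *)
Require Import Defs.
From HB Require Import structures.
From mathcomp Require Import all_boot all_order all_algebra.
From mathcomp Require Import reals.
From mathcomp Require Import zify ring lra.
From Stdlib Require Import FunctionalExtensionality Classical.
Import Order.TTheory GRing.Theory Num.Theory.
Local Open Scope ring_scope.

Definition dotQ (n : nat) (u w : nat -> rat) : rat := \sum_(k < n) u k * w k.

Lemma ex_max {T : eqType} {s : seq T} (g : T -> rat) {x0 : T} :
  x0 \in s -> exists2 x, x \in s & forall y, y \in s -> g y <= g x.
Proof.
elim: s x0 => // a s IH x0 _.
case: s IH => [|b s] IH.
  by exists a; rewrite ?inE // => y; rewrite inE => /eqP ->.
have [x xs hx] := IH b (mem_head _ _).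
case: (leP (g a) (g x)) => h.
- exists x; first by rewrite inE xs orbT.
  move=> y; rewrite inE => /orP [/eqP -> //|]. exact: hx.
- exists a; first exact: mem_head.
  move=> y; rewrite inE => /orP [/eqP -> //|/hx hy]. apply: le_trans hy _; exact: ltW.
Qed.

Lemma fm (n : nat) : forall (I : eqType) (s : seq I) (f : I -> nat -> rat),
  (exists u : nat -> rat, forall i, i \in s -> 0 < dotQ n u (f i)) \/
  (exists c : seq (rat * I), [/\ forall p, p \in c -> 0 <= p.1 /\ p.2 \in s,
       has (fun p => 0 < p.1) c &
       forall k, (k < n)%N -> \sum_(p <- c) p.1 * f p.2 k = 0]).
Proof.
elim: n => [|n IH] I s f.
  case: s => [|i s]; [left; exists (fun _ => 0) => i //| right].
  exists [:: (1, i)]; split => //.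
  by move=> p; rewrite mem_seq1 => /eqP -> /=; rewrite mem_head ler01.
pose b := fun i => f i n.
pose Z := [seq i <- s | b i == 0].
pose P := [seq i <- s | 0 < b i].
pose N := [seq i <- s | b i < 0].
pose s' : seq (I + (I * I))%type := map inl Z ++ [seq inr (p, q) | p <- P, q <- N].
pose f' (x : (I + (I*I))%type) : nat -> rat := match x with
  | inl i => f i | inr (p, q) => fun k => - b q * f p k + b p * f q k end.
have mems' : forall x, x \in s' -> match x with
   | inl i => i \in s /\ b i = 0
   | inr (p, q) => [/\ p \in s, q \in s, 0 < b p & b q < 0] end.
  move=> [i|[p q]]; rewrite mem_cat.
  - case/orP.
    + rewrite mem_map; last by move=> ? ? [].
      by rewrite mem_filter => /andP [/eqP -> ->].
    + by case/allpairsP => ? [].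
  - case/orP.
    + by case/mapP.
    + case/allpairsP => [[p' q']] /= [].
      rewrite !mem_filter => /andP [hp ps] /andP [hq qs] [-> ->]; split => //.
have f'n : forall x, x \in s' -> f' x n = 0.
  move=> [i|[p q]] /mems' /=; first by case.
  by move=> _; rewrite /b; ring.
case: (IH _ s' f') => [[u' hu']|[c' [hc1 hc2 hc3]]]; last first.
  right.
  pose g (x : rat * (I + (I*I))%type) : seq (rat * I) := match x.2 with
    | inl i => [:: (x.1, i)]
    | inr (p, q) => [:: (x.1 * - b q, p); (x.1 * b p, q)] end.
  exists (flatten [seq g x | x <- c']); split.
  - move=> p /flatten_mapP [[l x] /hc1 [/= hl /mems' hx]].
    case: x hx => [i [i1 i2]|[p' q'] [h1 h2 h3 h4]]; rewrite /g /=.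
      by rewrite inE => /eqP ->.
    rewrite !inE => /orP [] /eqP -> /=; split => //.
      by apply: mulr_ge0 => //; rewrite oppr_ge0 ltW.
    by apply: mulr_ge0 => //; rewrite ltW.
  - case/hasP: hc2 => [[l x] hx /= hl].
    have [_ /mems' hm] := hc1 _ hx.
    apply/hasP.
    case: x hx hm => [i|[p q]] hx hm.
      exists (l, i) => //; apply/flatten_mapP; exists (l, inl i) => //.
      by rewrite /g /= mem_head.
    exists (l * - b q, p).
      apply/flatten_mapP; exists (l, inr (p, q)) => //.
      by rewrite /g /= mem_head.
    case: hm => _ _ _ h4 /=; apply: mulr_gt0 => //; by rewrite oppr_gt0.
  - move=> k hk.
    rewrite big_flatten big_map /=.
    have -> : \sum_(x <- c') \sum_(p <- g x) p.1 * f p.2 k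
               = \sum_(x <- c') x.1 * f' x.2 k.
      apply: eq_bigr => [[l [i|[p q]]]] _; rewrite /g /=.
        by rewrite big_seq1.
      rewrite big_cons big_seq1 /=; ring.
    rewrite ltnS leq_eqVlt in hk; case/orP: hk => [/eqP ->|hk]; last exact: hc3.
    rewrite big_seq big1 // => x /hc1 [_ /f'n ->]; exact: mulr0.
left.
pose a := fun i => dotQ n u' (f i).
have ha' : forall p q, 0 < dotQ n u' (f' (inr (p, q))) -> 0 < - b q * a p + b p * a q.
  move=> p q; congr (0 < _).
  rewrite /dotQ /a /f' /dotQ mulr_sumr mulr_sumr -big_split /=.
  by apply: eq_bigr => k _; ring.
pose r := fun i => - a i / b i.
have rb : forall i, b i != 0 -> r i * b i = - a i by move=> i hi; rewrite /r divfK.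
have rPN : forall p q, p \in P -> q \in N -> r p < r q.
  move=> p q hp hq.
  have hs : inr (p, q) \in s' by rewrite mem_cat; apply/orP; right; apply: allpairs_f.
  have := ha' _ _ (hu' _ hs).
  move: hp hq; rewrite !mem_filter => /andP [hp _] /andP [hq _].
  have e1 := rb p (lt0r_neq0 hp); have e2 := rb q (ltr0_neq0 hq).
  have -> : - b q * a p + b p * a q = (b p * - b q) * (r q - r p).
    rewrite -[a p]opprK -[a q]opprK -e1 -e2; ring.
  rewrite pmulr_rgt0 ?subr_gt0 //; apply: mulr_gt0 => //; by rewrite oppr_gt0.
have [t [Ht1 Ht2]] : exists t, (forall p, p \in P -> r p < t) /\ (forall q, q \in N -> t < r q).
  have [eP|[p0 hp0]] : P = [::] \/ exists p0, p0 \in P.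
    by case: (P) => [|x l]; [left|right; exists x; exact: mem_head].
  - have [eN|[q0 hq0]] : N = [::] \/ exists q0, q0 \in N.
      by case: (N) => [|x l]; [left|right; exists x; exact: mem_head].
    + by exists 0; rewrite eP eN.
    + have [q hq hm] := ex_max (fun i => - r i) hq0.
      exists (r q - 1); rewrite eP; split => // q' hq'.
      have := hm _ hq'. move=> hh. lra.
  - have [eN|[q0 hq0]] : N = [::] \/ exists q0, q0 \in N.
      by case: (N) => [|x l]; [left|right; exists x; exact: mem_head].
    + have [p hp hm] := ex_max r hp0.
      exists (r p + 1); rewrite eN; split => // p' hp'.
      have := hm _ hp'. move=> hh; lra.
    + have [q hq hm] := ex_max (fun i => - r i) hq0.
      have [p hp hm'] := ex_max r hp0.
      have := rPN _ _ hp hq => hpq.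
      exists ((r p + r q) / 2); split.
      * move=> p' hp'; have := hm' _ hp'; move=> hh; lra.
      * move=> q' hq'; have := hm _ hq'; move=> hh; lra.
exists (fun k => if (k < n)%N then u' k else t) => i hi.
rewrite /dotQ big_ord_recr /= ltnn.
have -> : \sum_(k < n) (if (widen_ord (leqnSn n) k < n)%N then u' (widen_ord (leqnSn n) k) else t) *
      f i (widen_ord (leqnSn n) k) = a i.
  by apply: eq_bigr => k _; rewrite /= ltn_ord.
rewrite -/(b i).
have [hb|hb|hb] := ltgtP (b i) 0.
- have hq : i \in N by rewrite mem_filter hb.
  have := Ht2 _ hq; have := rb i (ltr0_neq0 hb). move=> e h. nra.
- have hp : i \in P by rewrite mem_filter hb.
  have := Ht1 _ hp; have := rb i (lt0r_neq0 hb). move=> e h. nra.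
- have hs : inl i \in s' by rewrite mem_cat map_f // mem_filter hb eqxx.
  have := hu' _ hs; rewrite hb mulr0 addr0 => //.
Qed.


Definition fv {n} (w : 'I_n -> int) : nat -> rat :=
  fun k => if insub k is Some k' then (w k')%:~R else 0.

Lemma dotQ_fv n (u : nat -> rat) (w : 'I_n -> int) :
  dotQ n u (fv w) = \sum_(k < n) u k * (w k)%:~R.
Proof. by apply: eq_bigr => k _; rewrite /fv valK. Qed.

Lemma clear_den n (u : nat -> rat) : exists (U : 'I_n -> int) (D : rat),
  0 < D /\ forall k : 'I_n, (U k)%:~R = D * u k.
Proof.
exists (fun k : 'I_n => numq (u k) * \prod_(j < n | j != k) denq (u j)),
  (\prod_(j<n) (denq (u j))%:~R).
split; first by apply: prodr_gt0 => j _; rewrite ltr0z denq_gt0.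
move=> k; rewrite intrM numqE rmorph_prod /= [in RHS](bigD1 k) //=; ring.
Qed.

Lemma exch_sum {d} (c : seq (rat * 'I_d)) (G : 'I_d -> rat) :
  \sum_i (\sum_(p <- c | p.2 == i) p.1) * G i = \sum_(p <- c) p.1 * G p.2.
Proof.
under eq_bigr do rewrite big_distrl big_mkcond /=.
rewrite exchange_big /=; apply: eq_bigr => p _.
rewrite -big_mkcond /=; apply: (big_pred1 p.2) => i /=; by rewrite eq_sym.
Qed.

Lemma sum_pos {T : eqType} (c : seq (rat * T)) :
  (forall p, p \in c -> 0 <= p.1) -> has (fun p => 0 < p.1) c -> 0 < \sum_(p <- c) p.1.
Proof.
elim: c => // p c IH H /= /orP [h|h]; rewrite big_cons.
- have : 0 <= \sum_(q <- c) q.1.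
    by rewrite big_seq sumr_ge0 // => q hq; apply: H; rewrite inE hq orbT.
  move=> h2; lra.
- have H' : forall q, q \in c -> 0 <= q.1 by move=> q hq; apply: H; rewrite inE hq orbT.
  have := IH H' h.
  have := H p (mem_head _ _). move=> h1 h2; lra.
Qed.

Lemma gordan_int n d (w : 'I_d -> 'I_n -> int) :
  (forall lam : 'I_d -> rat, (forall i, 0 <= lam i) ->
     (forall k, \sum_i lam i * (w i k)%:~R = 0) -> forall i, lam i = 0) ->
  exists u : 'I_n -> int, forall i, 0 < dotM u (w i).
Proof.
move=> H.
case: (fm n _ (enum 'I_d) (fun i => fv (w i))) => [[u hu]|[c [hc1 hc2 hc3]]].
- have [U [D [hD hU]]] := clear_den n u.
  exists U => i; have := hu i (mem_enum _ _); rewrite dotQ_fv => h.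
  rewrite -(ltr0z rat) /dotM rmorph_sum /=.
  under eq_bigr do rewrite intrM hU -mulrA.
  by rewrite -mulr_sumr mulr_gt0.
- pose lam i := \sum_(p <- c | p.2 == i) p.1.
  have hl : forall i, lam i = 0.
    apply: H.
    + move=> i; rewrite /lam big_seq_cond sumr_ge0 // => p /andP [/hc1 [] //].
    + move=> k; rewrite exch_sum -[RHS](hc3 k (ltn_ord k)).
      by apply: eq_bigr => p _; rewrite /fv valK.
  have := @sum_pos _ c (fun p hp => proj1 (hc1 p hp)) hc2.
  have e := exch_sum c (fun _ => 1).
  have e1 : \sum_(p <- c) p.1 = \sum_i lam i.
    rewrite /lam; move: e => /= e.
    rewrite (eq_bigr (fun p => p.1 * 1)); last by move=> p _; rewrite mulr1.
    rewrite -e; apply: eq_bigr => i _; exact: mulr1.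
  by rewrite e1 big1 ?ltxx // => i _; exact: hl.
Qed.


Section Cone.
Variables (R : realType) (n d : nat) (v : 'I_d -> 'I_n -> int).
Hypothesis Htor : toric_cone_data R v.

Lemma sum_single (j : 'I_d) (c : R) (F : 'I_d -> R) :
  \sum_i (if i == j then c else 0) * F i = c * F j.
Proof.
rewrite (bigD1 j) //= eqxx big1 ?addr0 // => i /negbTE ->; exact: mul0r.
Qed.

Lemma sum_drop (j : 'I_d) (lam F : 'I_d -> R) :
  \sum_i (if i == j then 0 else lam i) * F i = \sum_i lam i * F i - lam j * F j.
Proof.
rewrite [in RHS](bigD1 j) //= (bigD1 j) //= eqxx mul0r add0r.
rewrite addrAC subrr add0r; apply: eq_bigr => i /negbTE ->; done.
Qed.

Lemma pointed (lam : 'I_d -> R) : (forall i, 0 <= lam i) ->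
  (forall k, \sum_i lam i * (v i k)%:~R = 0) -> forall i, lam i = 0.
Proof.
case: Htor => [Hprim [Hray [Hconv Hfull]]] hl hs j.
apply/eqP; apply/negP => /negP hj.
pose x := fun k => lam j * (v j k)%:~R.
have h1 : in_sigma v x.
  exists (fun i => if i == j then lam j else 0); split.
    by move=> i; case: (i == j).
  by move=> k; rewrite sum_single.
have h2 : in_sigma v (fun k => - x k).
  exists (fun i => if i == j then 0 else lam i); split.
    by move=> i; case: (i == j).
  by move=> k; rewrite sum_drop hs sub0r.
have hv : forall k, v j k = 0.
  move=> k; have := Hconv _ h1 h2 k; rewrite /x => /eqP.
  by rewrite mulf_eq0 (negbTE hj) /= intr_eq0 => /eqP.
have hh : forall k, v j k = 2 * (fun _ : 'I_n => 0) k by move=> k; rewrite hv mulr0.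
by case: (Hprim j 2 (fun _ => 0) hh).
Qed.

Lemma ratr0_eq (x : rat) : ratr x = 0 :> R -> x = 0.
Proof.
move=> h; apply/eqP; rewrite eq_le -(ler0q R) -(lerq0 R) h lexx //.
Qed.

Lemma ratr_pointed (lam : 'I_d -> rat) : (forall i, 0 <= lam i) ->
  (forall k, \sum_i lam i * (v i k)%:~R = 0) -> forall i, lam i = 0.
Proof.
move=> hl hs i; apply: ratr0_eq.
apply: (pointed (fun i => ratr (lam i))) => [j|k]; first by rewrite ler0q.
have := congr1 (ratr : rat -> R) (hs k); rewrite rmorph_sum rmorph0 /= => e; rewrite -[RHS]e.
by apply: eq_bigr => j _; rewrite rmorphM /= ratr_int.
Qed.

Lemma dotM_lin (a b : int) (x y w : 'I_n -> int) :
  dotM (fun k => a * x k + b * y k) w = a * dotM x w + b * dotM y w.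
Proof.
rewrite /dotM !mulr_sumr -big_split; apply: eq_bigr => k _ /=; ring.
Qed.

Lemma dotMN (x w : 'I_n -> int) : dotM x (fun k => - w k) = - dotM x w.
Proof. by rewrite /dotM -sumrN; apply: eq_bigr => k _; ring. Qed.

Lemma interior : exists u0 : 'I_n -> int, forall rho, 0 < dotM u0 (v rho).
Proof. apply: gordan_int; exact: ratr_pointed. Qed.

Lemma sum_sign (j : 'I_d) (mu : 'I_d -> R) (a : 'I_d -> R) :
  \sum_i mu i * (if i == j then - a i else a i) = \sum_i mu i * a i - 2 * mu j * a j.
Proof.
rewrite [in RHS](bigD1 j) //= (bigD1 j) //= eqxx.
have -> : \sum_(i < d | i != j) mu i * (if i == j then - a i else a i) =
          \sum_(i < d | i != j) mu i * a i.
  by apply: eq_bigr => i /negbTE ->.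
ring.
Qed.

Lemma facet (rho : 'I_d) : exists u : 'I_n -> int,
  dotM u (v rho) = 0 /\ forall rho', rho' != rho -> 0 < dotM u (v rho').
Proof.
have [Hprim [Hray _]] := Htor.
have [u0 hu0] := interior.
pose w := fun i => if i == rho then (fun k => - v rho k) else v i.
have [u1 hu1] : exists u : 'I_n -> int, forall i, 0 < dotM u (w i).
  apply: gordan_int => lam hl hs.
  pose mu := fun i => ratr (lam i) : R.
  have hs' : forall k, \sum_i mu i * (v i k)%:~R - 2 * mu rho * (v rho k)%:~R = 0.
    move=> k; rewrite -sum_sign.
    have := congr1 (ratr : rat -> R) (hs k); rewrite rmorph_sum rmorph0 /= => e; rewrite -[RHS]e.
    apply: eq_bigr => j _; rewrite rmorphM /= ratr_int /w.
    by case: eqP => [->|_] //; rewrite intrN.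
  have hmu : forall i, 0 <= mu i by move=> i; rewrite ler0q.
  have [hr|hr] : mu rho = 0 \/ 0 < mu rho.
    by have := hmu rho; rewrite le_eqVlt => /orP [/eqP <-|->]; [left|right].
  - move=> i; apply: ratr0_eq; apply: (pointed mu hmu) => k.
    by have := hs' k; rewrite hr mulr0 mul0r subr0.
  - exfalso; apply: (Hray rho).
    exists (fun i => if i == rho then 0 else mu i / mu rho); split; [|split].
    + by move=> i; case: (i == rho) => //; apply: divr_ge0.
    + by rewrite eqxx.
    + move=> k; rewrite sum_drop.
      have -> : \sum_i mu i / mu rho * (v i k)%:~R = (\sum_i mu i * (v i k)%:~R) / mu rho.
        by rewrite mulr_suml; apply: eq_bigr => i _; rewrite mulrAC.
      have e := hs' k.
      have -> : \sum_i mu i * (v i k)%:~R = 2 * mu rho * (v rho k)%:~R by lra.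
      field; exact: lt0r_neq0 hr.
have hA := hu0 rho.
have hB : 0 < - dotM u1 (v rho) by have := hu1 rho; rewrite /w eqxx dotMN.
exists (fun k => dotM u0 (v rho) * u1 k + (- dotM u1 (v rho)) * u0 k); split.
  by rewrite dotM_lin; ring.
move=> rho' hr; rewrite dotM_lin; apply: addr_gt0; apply: mulr_gt0 => //.
by have := hu1 rho'; rewrite /w (negbTE hr).
Qed.

Lemma bez_seq (w : 'I_n -> int) (s : seq 'I_n) : uniq s ->
  exists u : 'I_n -> int, \sum_(k <- s) u k * w k = (\big[gcdn/0%N]_(k <- s) `|w k|%N)%:Z
   /\ forall j, j \in s -> (\big[gcdn/0%N]_(k <- s) `|w k|%N %| `|w j|)%N.
Proof.
elim: s => [|k s IH] /=.
  by move=> _; exists (fun _ => 0); rewrite !big_nil.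
case/andP => hk /IH [u [hu hd]].
have [a [b hab]] := Bezoutz (w k) (\big[gcdn/0%N]_(k <- s) `|w k|%N)%:Z.
exists (fun j => if j == k then a else b * u j); split.
  rewrite !big_cons eqxx.
  have -> : \sum_(j <- s) (if j == k then a else b * u j) * w j = b * \sum_(j <- s) u j * w j.
    rewrite mulr_sumr big_seq [in RHS]big_seq; apply: eq_bigr => j hj.
    have -> : (j == k) = false by apply/negbTE; apply: contraNneq hk => <-.
    by rewrite mulrA.
  by rewrite hu hab /gcdz absz_nat.
move=> j; rewrite inE big_cons => /orP [/eqP ->|hj]; first exact: dvdn_gcdl.
exact: dvdn_trans (dvdn_gcdr _ _) (hd j hj).
Qed.

Lemma unit_dual (rho : 'I_d) : exists u : 'I_n -> int, dotM u (v rho) = 1.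
Proof.
have [Hprim _] := Htor.
have [u [hu hd]] := @bez_seq (v rho) _ (index_enum_uniq 'I_n).
set g := (\big[gcdn/0%N]_(k <- index_enum 'I_n) `|v rho k|%N) in hu hd.
have hd' : forall k, (g%:Z %| v rho k)%Z.
  by move=> k; rewrite dvdzE absz_nat; apply: hd; rewrite mem_index_enum.
have := Hprim rho g%:Z (fun k => (v rho k %/ g%:Z)%Z).
case.
- by move=> k; rewrite mulrC divzK.
- by move=> e; exists u; rewrite /dotM hu e.
- by move=> e; have : (0 <= g%:Z) by []; rewrite e.
Qed.

End Cone.

Section Quiver.
Variables (R : realType) (n d : nat) (v : 'I_d -> 'I_n -> int).
Variables (r : nat) (D' : 'I_r.+1 -> 'I_d -> int).
Hypothesis Htor : toric_cone_data R v.
Hypothesis H0 : principal v (D' ord0).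
Hypothesis Hdist : forall i j : 'I_r.+1, i != j -> ~ principal v (fun rho => D' i rho - D' j rho).

Notation arr := (arrow v D').

Lemma lat_eq (x y : lat d r) : (forall k, x.1 k = y.1 k) -> (forall rho, x.2 rho = y.2 rho) -> x = y.
Proof.
case: x => x1 x2; case: y => y1 y2 /= h1 h2.
by congr pair; apply: functional_extensionality.
Qed.

Definition vecA (s : seq arr) : lat d r :=
  (fun k => \sum_(a <- s) (piA a).1 k, fun rho => \sum_(a <- s) lab a rho).
Definition vecZ (s : seq (int * arr)) : lat d r :=
  (fun k => \sum_(p <- s) p.1 * (piA p.2).1 k, fun rho => \sum_(p <- s) p.1 * lab p.2 rho).
Definition zeroL : lat d r := (fun _ => 0, fun _ => 0).
Definition pathv (i j : 'I_r.+1) (E : 'I_d -> int) : lat d r :=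
  (fun k => ((k == j)%:R - (k == i)%:R : int), E).

Lemma ZQ_vecZ s : ZQ v D' (vecZ s).
Proof. by exists s. Qed.

Lemma ZQ_ex x : ZQ v D' x -> exists s, x = vecZ s.
Proof. by case=> s [h1 h2]; exists s; apply: lat_eq. Qed.

Lemma vecZ_toZ s : vecZ (map (fun a => (1, a)) s) = vecA s.
Proof. by apply: lat_eq => [k|rho] /=; rewrite big_map; apply: eq_bigr => a _; rewrite mul1r. Qed.

Lemma ZQ_vecA s : ZQ v D' (vecA s).
Proof. rewrite -vecZ_toZ; exact: ZQ_vecZ. Qed.

Lemma vecZ_cat s1 s2 : vecZ (s1 ++ s2) = addL (vecZ s1) (vecZ s2).
Proof. by apply: lat_eq => [k|rho] /=; rewrite big_cat. Qed.

Lemma vecA_cat s1 s2 : vecA (s1 ++ s2) = addL (vecA s1) (vecA s2).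
Proof. by apply: lat_eq => [k|rho] /=; rewrite big_cat. Qed.

Lemma vecZ_neg s : addL (vecZ s) (vecZ (map (fun p => (- p.1, p.2)) s)) = zeroL.
Proof.
apply: lat_eq => [k|rho] /=; rewrite big_map -big_split big1 // => p _ /=; ring.
Qed.

Section Lin.
Variable f : lat d r -> R.
Hypothesis hf : dualR v D' f.

Lemma f_zero : f zeroL = 0.
Proof.
have hz : zeroL = vecZ [::] by apply: lat_eq => [k|rho]; rewrite /= big_nil.
have e : addL zeroL zeroL = zeroL by apply: lat_eq => [k|rho]; rewrite /= addr0.
have := hf _ _ (ZQ_vecZ [::]) (ZQ_vecZ [::]); rewrite -hz e => h.
lra.
Qed.

Lemma f_single (z : int) (a : arr) : f (vecZ [:: (z, a)]) = z%:~R * f (piA a).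
Proof.
have e1 : vecZ [:: (1, a)] = piA a by apply: lat_eq => [k|rho]; rewrite /= big_seq1 mul1r.
have hnat : forall m : nat, f (vecZ [:: (m%:Z, a)]) = m%:R * f (piA a).
  elim=> [|m IH].
    have -> : vecZ [:: (0%:Z, a)] = zeroL by apply: lat_eq => [k|rho]; rewrite /= big_seq1 mul0r.
    by rewrite f_zero mul0r.
  have -> : vecZ [:: (m.+1%:Z, a)] = addL (vecZ [:: (m%:Z, a)]) (vecZ [:: (1, a)]).
    by apply: lat_eq => [k|rho]; rewrite /= !big_seq1 -mulrDl -addn1 PoszD.
  rewrite hf; [|exact: ZQ_vecZ..]. rewrite IH e1 -addn1 natrD; ring.
case: z => m; first by rewrite hnat.
have e : addL (vecZ [:: (Negz m, a)]) (vecZ [:: (m.+1%:Z, a)]) = zeroL.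
  apply: lat_eq => [k|rho]; rewrite /= !big_seq1 NegzE /=; ring.
have := hf _ _ (ZQ_vecZ [:: (Negz m, a)]) (ZQ_vecZ [:: (m.+1%:Z, a)]).
rewrite e f_zero hnat NegzE => h.
rewrite intrN; lra.
Qed.

Lemma f_vecZ s : f (vecZ s) = \sum_(p <- s) p.1%:~R * f (piA p.2).
Proof.
elim: s => [|p s IH].
  have -> : vecZ [::] = zeroL by apply: lat_eq => [k|rho]; rewrite /= big_nil.
  by rewrite f_zero big_nil.
rewrite -cat1s vecZ_cat hf; [|exact: ZQ_vecZ..]. rewrite IH big_cons; case: p => z a.
by rewrite f_single.
Qed.

Lemma f_vecA s : f (vecA s) = \sum_(a <- s) f (piA a).
Proof.
rewrite -vecZ_toZ f_vecZ big_map; apply: eq_bigr => a _; exact: mul1r.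
Qed.

End Lin.

Lemma inC_vecA (f : lat d r -> R) s : inC v D' f -> 0 <= f (vecA s).
Proof.
case=> hf hC; rewrite f_vecA //; apply: sumr_ge0 => a _; exact: hC.
Qed.

Lemma eff_sum_pos (E : 'I_d -> int) : effective E -> nonzero_div E -> 0 < \sum_rho E rho.
Proof.
move=> he [rho hr]; rewrite (bigD1 rho) //=.
have : 0 <= \sum_(i < d | i != rho) E i by apply: sumr_ge0 => i _; exact: he.
have := he rho; rewrite le_eqVlt eq_sym (negbTE hr) /=. by move=> h1 h2; apply: (lt_le_trans h1); rewrite lerDl.
Qed.

Lemma eff_sum_ge0 (E : 'I_d -> int) : effective E -> 0 <= \sum_rho E rho.
Proof. by move=> he; apply: sumr_ge0 => i _; exact: he. Qed.

Lemma decomp_step (K : int) :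
  (forall i j E, sect v D' i j E -> \sum_rho E rho < K -> exists s, vecA s = pathv i j E) ->
  forall i j E, sect v D' i j E -> \sum_rho E rho <= K -> exists s, vecA s = pathv i j E.
Proof.
move=> IH i j E hs hK.
have [hz|hnz] := boolP [forall rho, E rho == 0].
- have hE : forall rho, E rho = 0 by move=> rho; apply/eqP; move/forallP: hz.
  have eij : i = j.
    case: (eqVneq i j) => [//|hij]; exfalso; apply: (Hdist _ _ hij).
    case: hs => _ [u hu]; exists u => rho; rewrite -hu hE; ring.
  subst j; exists [::]; apply: lat_eq => [k|rho]; rewrite /= big_nil ?subrr //.
- have hnz' : nonzero_div E by case/forallPn: hnz => rho hr; exists rho.
  case: (classic (irreducible v D' i j E)) => [hirr|hnirr].
    by exists [:: Arrow hirr]; apply: lat_eq => [k|rho]; rewrite /= big_seq1.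
  have [k [E1 [E2 [h1 h2 h3 h4 h5]]]] : exists (k : 'I_r.+1) (E1 E2 : 'I_d -> int),
      [/\ sect v D' i k E1, sect v D' k j E2, nonzero_div E1, nonzero_div E2 &
          forall rho, E rho = E1 rho + E2 rho].
    by apply: NNPP => hne; apply: hnirr.
  have hs1 : \sum_rho E rho = \sum_rho E1 rho + \sum_rho E2 rho.
    by rewrite -big_split; apply: eq_bigr => rho _; exact: h5.
  have p1 := @eff_sum_pos E1 (proj1 h1) h3.
  have p2 := @eff_sum_pos E2 (proj1 h2) h4.
  have [s1 e1] : exists s, vecA s = pathv i k E1 by apply: IH h1 _; lia.
  have [s2 e2] : exists s, vecA s = pathv k j E2 by apply: IH h2 _; lia.
  exists (s1 ++ s2); rewrite vecA_cat e1 e2; apply: lat_eq => [x|rho] /=.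
    ring.
  by rewrite h5.
Qed.

Lemma decomp i j E : sect v D' i j E -> exists s, vecA s = pathv i j E.
Proof.
move=> hs.
suff : forall K : nat, forall i j E, sect v D' i j E -> \sum_rho E rho <= K%:Z ->
   exists s, vecA s = pathv i j E.
  move=> H; have h0 := @eff_sum_ge0 _ (proj1 hs).
  apply: (H (absz (\sum_rho E rho)) i j E hs); rewrite gez0_abs //.
elim=> [|K IH]; apply: decomp_step => i' j' E' hs' hK.
  by have := @eff_sum_ge0 _ (proj1 hs'); lia.
by apply: IH => //; lia.
Qed.


Lemma lat_eqE (x y : lat d r) : x = y -> (forall k, x.1 k = y.1 k) /\ (forall rho, x.2 rho = y.2 rho).
Proof. by move=> ->. Qed.

Lemma psi_eff (u : 'I_n -> int) : (forall rho, 0 <= dotM u (v rho)) ->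
  exists s, vecA s = psi v r u.
Proof.
move=> hu.
have hs : sect v D' ord0 ord0 (divM v u).
  split; first by move=> rho; exact: hu.
  by exists u => rho; ring.
have [s e] := decomp _ _ _ hs; exists s; rewrite e; apply: lat_eq => [k|rho] //=.
by rewrite subrr.
Qed.

Lemma vecZ_negmap s : vecZ (map (fun p => (- p.1, p.2)) s) =
  (fun k => - (vecZ s).1 k, fun rho => - (vecZ s).2 rho).
Proof. by apply: lat_eq => [k|rho] /=; rewrite big_map -sumrN; apply: eq_bigr => p _ => /=; ring. Qed.

Lemma big_N (P : pred 'I_d) (a T : 'I_d -> int) : (forall rho, P rho -> 0 < a rho) ->
  exists N : int, 0 <= N /\ forall rho, P rho -> 0 <= N * a rho + T rho /\ 0 <= N * a rho - T rho.
Proof.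
move=> ha; exists (\sum_rho `|T rho|); split; first by apply: sumr_ge0 => i _.
move=> rho hr; have := ha rho hr.
have : `|T rho| <= \sum_rho `|T rho|.
  rewrite (bigD1 rho) //= lerDl; by apply: sumr_ge0 => i _.
set N := \sum_rho `|T rho|.
move=> h1 h2.
have hN0 : 0 <= N := le_trans (normr_ge0 _) h1.
have h3 : N <= N * a rho by nia.
have : - `|T rho| <= T rho <= `|T rho| by rewrite -ler_norml.
case/andP => h4 h5; split; lia.
Qed.

Lemma ZQ_psi (u : 'I_n -> int) : ZQ v D' (psi v r u).
Proof.
have [u0 hu0] := @interior R n d v Htor.
have [N [hN hNu]] := @big_N xpredT (fun rho => dotM u0 (v rho)) (fun rho => dotM u (v rho))
   (fun rho _ => hu0 rho).
have [s1 e1] : exists s, vecA s = psi v r (fun k => N * u0 k + 1 * u k).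
  by apply: psi_eff => rho; rewrite dotM_lin mul1r; case: (hNu rho isT).
have [s2 e2] : exists s, vecA s = psi v r (fun k => N * u0 k + 0 * u k).
  by apply: psi_eff => rho; rewrite dotM_lin mul0r addr0; apply: mulr_ge0 => //; apply: ltW.
have [e11 e12] := lat_eqE _ _ e1; have [e21 e22] := lat_eqE _ _ e2.
have -> : psi v r u = vecZ (map (fun a => (1, a)) s1 ++ map (fun p => (- p.1, p.2)) (map (fun a => (1, a)) s2)).
  rewrite vecZ_cat vecZ_negmap !vecZ_toZ; apply: lat_eq => [k|rho] /=.
    by have := e11 k; have := e21 k; rewrite /= => -> ->; rewrite subrr.
  have := e12 rho; have := e22 rho; rewrite /= => -> ->; rewrite /divM !dotM_lin; ring.
exact: ZQ_vecZ.
Qed.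

Lemma psi_add (x y : 'I_n -> int) : psi v r (fun k => x k + y k) = addL (psi v r x) (psi v r y).
Proof.
apply: lat_eq => [k|rho] /=; first by rewrite addr0.
rewrite /divM /dotM -big_split; apply: eq_bigr => k _ /=; ring.
Qed.

Lemma additive_scale (g : ('I_n -> int) -> R) :
  (forall x y, g (fun k => x k + y k) = g x + g y) ->
  forall (a : int) x, g (fun k => a * x k) = a%:~R * g x.
Proof.
move=> hg.
have g0 : g (fun _ => 0) = 0.
  have := hg (fun _ => 0) (fun _ => 0).
  have -> : (fun k : 'I_n => (fun _ => 0 : int) k + (fun _ => 0) k) = (fun _ => 0).
    by apply: functional_extensionality => k; rewrite addr0.
  move=> h; lra.
have hn : forall (m : nat) x, g (fun k => m%:Z * x k) = m%:R * g x.
  elim=> [|m IH] x.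
    have -> : (fun k : 'I_n => 0%:Z * x k) = (fun _ => 0).
      by apply: functional_extensionality => k; rewrite mul0r.
    by rewrite g0 mul0r.
  have -> : (fun k : 'I_n => m.+1%:Z * x k) = (fun k => (fun k => m%:Z * x k) k + x k).
    by apply: functional_extensionality => k /=; rewrite -addn1 PoszD mulrDl mul1r.
  by rewrite hg IH -addn1 natrD mulrDl mul1r.
case=> m x; first exact: hn.
have := hg (fun k => Negz m * x k) (fun k => m.+1%:Z * x k).
have -> : (fun k => (fun k => Negz m * x k) k + (fun k => m.+1%:Z * x k) k) = (fun _ => 0).
  by apply: functional_extensionality => k /=; rewrite NegzE; ring.
rewrite g0 hn NegzE intrN => h; lra.
Qed.

Lemma vecA1 (a : arr) : vecA [:: a] = piA a.
Proof. by apply: lat_eq => [k|rho]; rewrite /= big_seq1. Qed.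

Lemma ZQ_piA (a : arr) : ZQ v D' (piA a).
Proof. rewrite -vecA1; exact: ZQ_vecA. Qed.

Lemma sect0 rho i j : exists E, sect v D' i j E /\ E rho = 0.
Proof.
have [ur [hur0 hur]] := @facet R n d v Htor rho.
have [u1 hu1] := @unit_dual R n d v Htor rho.
pose c := D' i rho - D' j rho.
have [N [hN hNu]] := @big_N (fun rho' => rho' != rho) (fun rho' => dotM ur (v rho'))
   (fun rho' => D' j rho' - D' i rho' + c * dotM u1 (v rho')) hur.
pose u := fun k => c * u1 k + N * ur k.
exists (fun rho' => D' j rho' - D' i rho' + divM v u rho'); split; last first.
  by rewrite /divM /u dotM_lin hu1 hur0 /c; ring.
split; last by exists u => rho'; ring.
move=> rho'; rewrite /divM /u dotM_lin.
case: (eqVneq rho' rho) => [->|h].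
  by rewrite hu1 hur0 /c; lia.
have [h1 _] := hNu rho' h; lia.
Qed.

Definition Sub (s S : seq arr) := forall f : lat d r -> R, inC v D' f -> f (vecA S) = 0 -> f (vecA s) = 0.

Lemma Sub_split (A B : seq arr) (f : lat d r -> R) : inC v D' f -> f (vecA (A ++ B)) = 0 ->
  f (vecA A) = 0 /\ f (vecA B) = 0.
Proof.
move=> hC; have [hf _] := hC.
rewrite vecA_cat hf; [|exact: ZQ_vecA..].
have := inC_vecA f A hC; have := inC_vecA f B hC; move=> h1 h2 h3; split; lra.
Qed.

Lemma Sub_l s T : Sub s (s ++ T).
Proof. by move=> f hC h; case: (Sub_split _ _ _ hC h). Qed.

Lemma Sub_r s S T : Sub s S -> Sub s (T ++ S).
Proof. by move=> hs f hC h; apply: hs => //; case: (Sub_split _ _ _ hC h). Qed.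

Lemma pairs_list rho (L : seq ('I_r.+1 * 'I_r.+1)) : exists S, (vecA S).2 rho = 0 /\
  forall ij, ij \in L -> exists s E, [/\ Sub s S, vecA s = pathv ij.1 ij.2 E, E rho = 0
      & sect v D' ij.1 ij.2 E].
Proof.
elim: L => [|ij L [S [hS0 hS]]].
  by exists [::]; split => //; rewrite /= big_nil.
have [E [hE hE0]] := sect0 rho ij.1 ij.2.
have [s e] := decomp _ _ _ hE.
exists (s ++ S); split.
  have [_ e2] := lat_eqE _ _ e; rewrite vecA_cat /=; move: (e2 rho) hS0 => /= -> ->; by rewrite hE0 addr0.
move=> ij'; rewrite inE => /orP [/eqP ->|h].
  by exists s, E; split => //; apply: Sub_l.
have [s' [E' [h1 h2 h3 h4]]] := hS ij' h.
by exists s', E'; split => //; apply: Sub_r.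
Qed.

Lemma Pi_dualR rho : dualR v D' (Pi_rho R rho).
Proof. by move=> x y _ _; rewrite /Pi_rho /= intrD. Qed.

Lemma Pi_inC rho : inC v D' (Pi_rho R rho).
Proof.
split; first exact: Pi_dualR.
move=> a; rewrite /Pi_rho /= ler0z; case: (arrow_irr a) => [[he _] _]; exact: he.
Qed.

Lemma pm_rho rho : perfect_matching v D' (Pi_rho R rho).
Proof.
have [ur [hur0 hur]] := @facet R n d v Htor rho.
have [u1 hu1] := @unit_dual R n d v Htor rho.
have [sr er] : exists s, vecA s = psi v r ur.
  apply: psi_eff => rho'; case: (eqVneq rho' rho) => [->|h]; first by rewrite hur0.
  exact: ltW (hur _ h).
have [SL [hSL0 hSL]] := pairs_list rho [seq (i, j) | i <- enum 'I_r.+1, j <- enum 'I_r.+1].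
pose S := sr ++ SL.
have hS0 : (vecA S).2 rho = 0.
  have [_ e2] := lat_eqE _ _ er; rewrite /S vecA_cat /=; move: (e2 rho) hSL0 => /= -> ->; by rewrite addr0.
pose F := fun f : lat d r -> R =>
  inC v D' f /\ \sum_(i < 1) (fun _ => 1 : R) i * f ((fun _ => vecA S) i) = 0.
have hF : forall f, F f <-> inC v D' f /\ f (vecA S) = 0.
  by move=> f; rewrite /F big_ord1 mul1r.
have Pi_u1 : Pi_rho R rho (psi v r u1) = 1 by rewrite /Pi_rho /= /divM hu1.
have FPi : F (Pi_rho R rho).
  by apply/hF; split; [exact: Pi_inC|rewrite /Pi_rho hS0].
have Pinz : ~ eqZQ v D' (Pi_rho R rho) (fun _ => 0).
  by move=> h; have := h _ (ZQ_psi u1); rewrite Pi_u1 => /eqP; rewrite oner_eq0.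
have Fmult : forall f, F f -> forall x, ZQ v D' x ->
    f x = f (psi v r u1) * Pi_rho R rho x.
  move=> f /hF [hC hf0]; have [hf hCa] := hC.
  pose phi := fun u => f (psi v r u).
  have phiadd : forall x y, phi (fun k => x k + y k) = phi x + phi y.
    by move=> x y; rewrite /phi psi_add hf //; exact: ZQ_psi.
  have phisc := additive_scale _ phiadd.
  have philin : forall a b x y, phi (fun k => a * x k + b * y k) = a%:~R * phi x + b%:~R * phi y.
    move=> a b x y; rewrite -!phisc; exact: (phiadd (fun k => a * x k) (fun k => b * y k)).
  have phi_eff : forall u, (forall rho', 0 <= dotM u (v rho')) -> 0 <= phi u.
    by move=> u hu; have [s e] := psi_eff _ hu; rewrite /phi -e; exact: inC_vecA.
  have phur : phi ur = 0 by rewrite /phi -er; apply: (Sub_l sr SL) hC hf0.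
  have perp : forall w, dotM w (v rho) = 0 -> phi w = 0.
    move=> w hw.
    have [N [hN hNw]] := @big_N (fun rho' => rho' != rho) (fun rho' => dotM ur (v rho'))
       (fun rho' => dotM w (v rho')) hur.
    have h1 : 0 <= phi (fun k => N * ur k + 1 * w k).
      apply: phi_eff => rho'; rewrite dotM_lin; case: (eqVneq rho' rho) => [->|h].
        by rewrite hur0 hw mulr0 addr0.
      by have [h1 _] := hNw rho' h; rewrite mul1r.
    have h2 : 0 <= phi (fun k => N * ur k + (-1) * w k).
      apply: phi_eff => rho'; rewrite dotM_lin; case: (eqVneq rho' rho) => [->|h].
        by rewrite hur0 hw mulr0 addr0.
      by have [_ h2] := hNw rho' h; rewrite mulN1r.
    rewrite !philin phur mulr0 !add0r mul1r intrN mulN1r in h1 h2; lra.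
  have all : forall u, phi u = (dotM u (v rho))%:~R * phi u1.
    move=> u; set c := dotM u (v rho).
    have := perp (fun k => 1 * u k + (- c) * u1 k).
    rewrite dotM_lin hu1 -/c mulr1 mul1r subrr => /(_ erefl).
    rewrite philin mul1r intrN mulNr => /eqP; rewrite subr_eq0 => /eqP //.
  have arr_val : forall a : arr, f (piA a) = (lab a rho)%:~R * phi u1.
    move=> a.
    have mem : (hd a, tl a) \in [seq (i, j) | i <- enum 'I_r.+1, j <- enum 'I_r.+1].
      by apply: allpairs_f; rewrite mem_enum.
    have [s [E [hsub hv hE hsect]]] := hSL _ mem.
    have fs : f (vecA s) = 0 by apply: (Sub_r _ _ sr hsub) hC hf0.
    have [_ [u2 hu2]] := hsect.
    have [[_ [u3 hu3]] _] := arrow_irr a.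
    have e : addL (piA a) (vecA s) = psi v r (fun k => 1 * u3 k + 1 * u2 k).
      rewrite hv; apply: lat_eq => [k|rho'] /=; first by ring.
      rewrite /divM dotM_lin -!/(divM v _ rho') -hu2 -hu3 /=; ring.
    have := hf _ _ (ZQ_piA a) (ZQ_vecA s); rewrite e fs addr0 => <-.
    rewrite -/(phi _) all dotM_lin -!/(divM v _ rho) -hu2 -hu3 /= hE; congr (_ * _).
    congr (_%:~R); ring.
  move=> x /ZQ_ex [s ->]; rewrite f_vecZ // /Pi_rho /= rmorph_sum mulr_sumr.
  apply: eq_bigr => p _; rewrite arr_val /= intrM /phi; ring.
split.
- split; [split; [exact: Pi_dualR|by move=> x _; exists (x.2 rho)]|split => //].
  move=> c g [hg hgi] he.
  have := he _ (ZQ_psi u1); rewrite Pi_u1.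
  have [z hz] := hgi _ (ZQ_psi u1); rewrite hz -intrM => h.
  have h' : c * z = 1.
    by apply/eqP; rewrite -(eqr_int R) -h.
  have hc : (`|c| = 1)%N.
    by move: (congr1 absz h'); rewrite abszM => /eqP; rewrite muln_eq1 => /andP [/eqP].
  lia.
- exists F; split => //; split.
  + exists 1%N, (fun _ => 1), (fun _ => vecA S); split.
    * by move=> _; exact: ZQ_vecA.
    * by move=> f hf; rewrite big_ord1 mul1r; exact: inC_vecA.
    * by move=> f.
  + exists (Pi_rho R rho); split => // f hf.
    by exists (f (psi v r u1)) => x hx; exact: Fmult.
Qed.

Lemma extr rho : extremal_at v D' (Pi_rho R rho) rho.
Proof. by move=> u; split => //; exact: ZQ_psi. Qed.

Lemma supp_iff rho (a : arr) : supp (Pi_rho R rho) a <-> x_divides rho (lab a).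
Proof.
rewrite /supp /Pi_rho /= ltr0z.
have he : effective (lab a) by case: (arrow_irr a) => [[he _] _].
split => [h|[E' [hE' hE]]].
  exists (fun rho' => lab a rho' - (rho' == rho)%:R); split; last by move=> rho'; ring.
  move=> rho'; case: (eqVneq rho' rho) => [->|hr] /=; first by lia.
  by rewrite subr0; exact: he.
have := hE rho; rewrite eqxx; have := hE' rho; move=> h1 h2; lia.
Qed.

End Quiver.

Theorem proposition2p12 (R : realType) (n d : nat) (v : 'I_d -> 'I_n -> int)
    (r : nat) (D' : 'I_r.+1 -> 'I_d -> int) :
  toric_cone_data R v ->
  principal v (D' ord0) ->
  (forall i j : 'I_r.+1, i != j -> ~ principal v (fun rho => D' i rho - D' j rho)) ->
  forall rho : 'I_d,
    perfect_matching_extremal v D' (@Pi_rho R d r rho) /\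
    extremal_at v D' (@Pi_rho R d r rho) rho /\
    (forall a : arrow v D', supp (@Pi_rho R d r rho) a <-> x_divides rho (lab a)).
Proof.
move=> Htor H0 Hdist rho.
have hx := @extr R n d v r D' Htor Hdist rho.
split; [split; [exact: (@pm_rho R n d v r D' Htor Hdist)|by exists rho]|split => //].
by move=> a; exact: (@supp_iff R n d v r D' rho a).
Qed.
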